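(* Let $q$ be a prime power, $n,r$ integers with $r\le\lfloor n/2\rfloor$, and $0\le u,s\le r$, $1\le d\le r$. Let ${\bf X} = ({\bf A}\mid{\bf B})\in\mathrm{GF}(q)^{r\times n}$ with ${\bf A}$ having $r$ columns and ${\bf B}$ having $n-r$ columns, and write ${\bf A} = ({\bf A}_1\mid{\bf a}\mid{\bf A}_2)$, ${\bf B}=({\bf B}_1\mid{\bf b}\mid{\bf B}_2)$, where ${\bf a}$ and ${\bf b}$ are the $d$-th columns of ${\bf A}$ and ${\bf B}$ respectively. Then ${\bf X}\in F(u,s,d)$ if and only if $\mathrm{rk}({\bf X}) = r$, $\mathrm{rk}({\bf B})\le u$, and $\mathrm{rk}({\bf B}_1-{\bf A}_1\mid{\bf b}-{\bf a}\mid{\bf B}_2)\le s$.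
   Context: $E_r(q,n)$ is the set of $r$-dimensional subspaces of $\mathrm{GF}(q)^n$ with injection distance $d_{\mathrm{I}}(U,V)=\dim(U+V)-\min\{\dim U,\dim V\}$; $B_t(U)=\{V\in E_r(q,n): d_{\mathrm{I}}(U,V)\le t\}$; $R({\bf M})$ is the row space of ${\bf M}$. For $0\le d\le r$, ${\bf P}_d\in\mathrm{GF}(q)^{r\times(n-r)}$ is the matrix with ${\bf I}_d$ in its top-left $d\times d$ block and zeros elsewhere, and $U_d = R({\bf I}_r\mid{\bf P}_d)$. $F(u,s,d)$ is the set of all matrices in $\mathrm{GF}(q)^{r\times n}$ of rank $r$ whose row space lies in $B_u(U_0)\cap B_s(U_d)$. *)

(* Defs.v *)
From HB Require Import structures.
From mathcomp Require Import all_boot all_order all_algebra all_field.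
Set Implicit Arguments. Unset Strict Implicit. Unset Printing Implicit Defensive.
Import GRing.Theory.
Local Open Scope ring_scope.

(* Subspaces of GF(q)^n are represented as row spaces R(M) of matrices M.
   dim R(M) = \rank M and R(M) + R(N) = R((M + N)%MS). *)

Definition injdist (F : fieldType) (k l n : nat)
  (U : 'M[F]_(k, n)) (V : 'M[F]_(l, n)) : nat :=
  (\rank (U + V)%MS - minn (\rank U) (\rank V))%N.

Definition Pmx (F : fieldType) (r m d : nat) : 'M[F]_(r, m) :=
  \matrix_(i < r, j < m) (if (i < d)%N && (val i == val j) then 1 else 0).

Definition Ud (F : fieldType) (r m d : nat) : 'M[F]_(r, r + m) :=
  row_mx 1%:M (Pmx F r m d).

(* B_t(U) membership for the row space of X, restricted to E_r(q,n) *)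
Definition in_ball (F : fieldType) (r n t : nat)
  (U : 'M[F]_(r, n)) (X : 'M[F]_(r, n)) : bool :=
  (\rank X == r) && (injdist X U <= t)%N.

Definition Fset (F : fieldType) (r m u s d : nat) (X : 'M[F]_(r, r + m)) : bool :=
  [&& \rank X == r, in_ball u (Ud F r m 0) X & in_ball s (Ud F r m d) X].

(* For X = (A | B) with A = lsubmx X (r columns), B = rsubmx X (m columns):
   the matrix (B_1 - A_1 | b - a | B_2), where a, b are the d-th columns
   (1-indexed), i.e. columns j < d (0-indexed) are B - A and the rest are B. *)
Definition diffBA (F : fieldType) (r m d : nat) (X : 'M[F]_(r, r + m)) : 'M[F]_(r, m) :=
  \matrix_(i < r, j < m)
    (if (j < d)%N
     then rsubmx X i j - X i (widen_ord (leq_addl r m) j)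
     else rsubmx X i j).

(* Main.v *)
Require Import Defs.
From mathcomp Require Import all_boot all_order all_algebra all_field.
Local Open Scope ring_scope.
Import GRing.Theory.

Lemma unit_blk (F : fieldType) r m (P : 'M[F]_(r, m)) :
  block_mx 1%:M (- P) 0 1%:M \in unitmx.
Proof. by rewrite unitmxE det_ublock !det1 mulr1 unitr1. Qed.

Lemma rank_blk (F : fieldType) r m (P C : 'M[F]_(r, m)) :
  \rank (col_mx (row_mx 1%:M P) (row_mx 0 C)) = (r + \rank C)%N.
Proof.
rewrite -block_mxEv -(mxrankMfree _ (_ : row_free (block_mx 1%:M (- P) 0 1%:M))).
  rewrite mulmx_block !mulmx1 !mul1mx !mul0mx !mulmx0 addr0 add0r addNr add0r.
  by rewrite rank_diag_block_mx mxrank1.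
by rewrite row_free_unit unit_blk.
Qed.

Lemma rank_U (F : fieldType) r m (P : 'M[F]_(r, m)) :
  \rank (row_mx 1%:M P) = r.
Proof.
rewrite -(mxrankMfree _ (_ : row_free (block_mx 1%:M (- P) 0 1%:M))).
  by rewrite mul_row_block !mulmx1 !mul1mx mulmx0 addr0 addNr rank_row_mx0 mxrank1.
by rewrite row_free_unit unit_blk.
Qed.

Lemma rank_key (F : fieldType) r m (X : 'M[F]_(r, r + m)) (P : 'M_(r, m)) :
  \rank (X + row_mx 1%:M P)%MS = (r + \rank (rsubmx X - lsubmx X *m P)%R)%N.
Proof.
have eX : X = lsubmx X *m row_mx 1%:M P + row_mx 0 (rsubmx X - lsubmx X *m P).
  by rewrite mul_mx_row mulmx1 add_row_mx addr0 addrC subrK hsubmxK.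
rewrite addsmxC {1}eX.
rewrite (addsmx_addKl _ (submxMl _ _)).
by rewrite addsmxE rank_blk.
Qed.

Lemma injdist_eq (F : fieldType) r m (X : 'M[F]_(r, r + m)) (P : 'M_(r, m)) :
  \rank X = r ->
  injdist X (row_mx 1%:M P) = \rank (rsubmx X - lsubmx X *m P)%R.
Proof.
move=> rX; rewrite /injdist rank_key rX rank_U minnn.
by rewrite addKn.
Qed.

Lemma Pmx0 (F : fieldType) r m : Pmx F r m 0 = 0.
Proof. by apply/matrixP=> i j; rewrite !mxE. Qed.

Lemma diffBA_eq (F : fieldType) r m d (X : 'M[F]_(r, r + m)) :
  (d <= r)%N -> @diffBA F r m d X = rsubmx X - lsubmx X *m Pmx F r m d.
Proof.
move=> Hdr; apply/matrixP=> i j; rewrite !mxE.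
case: ifP => jd.
  have jr : (j < r)%N by apply: leq_trans jd Hdr.
  rewrite (bigD1 (Ordinal jr)) //= big1 ?addr0.
    rewrite !mxE /= jd eqxx mulr1; congr (_ - X i _); exact: val_inj.
  move=> k /eqP nk; rewrite !mxE.
  case: ifP => [/andP [_ /eqP kj]|]; last by rewrite mulr0.
  by exfalso; apply: nk; apply: val_inj.
rewrite big1 ?subr0 // => k _; rewrite !mxE.
case: ifP => [/andP [kd /eqP kj]|]; last by rewrite mulr0.
by rewrite -kj kd in jd.
Qed.

(* n = r + m; the hypothesis r <= floor(n/2) is r <= m. GF(q) is any finite field F. *)
Theorem lemma10 (F : finFieldType) (r m u s d : nat)
  (Hrm : (r <= m)%N) (Hu : (u <= r)%N) (Hs : (s <= r)%N)
  (Hd1 : (1 <= d)%N) (Hdr : (d <= r)%N) (X : 'M[F]_(r, r + m)) :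
  @Fset F r m u s d X =
  [&& \rank X == r, (\rank (rsubmx X) <= u)%N & (\rank (@diffBA F r m d X) <= s)%N].
Proof.
rewrite /Fset /in_ball /Ud.
case rX: (\rank X == r) => //=.
move/eqP: rX => rX.
rewrite !injdist_eq // Pmx0 mulmx0 subr0 diffBA_eq //.
Qed.
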